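(* Let $R$ be an integral domain and $I$ an ideal of $R[X]$ such that $I\cap R$ is a maximal ideal of $R$. Then $I$ is power stable.
   Context: An ideal $I$ of the polynomial ring $R[X]$ over an integral domain $R$ is called power stable if $I^t\cap R = (I\cap R)^t$ for all integers $t\geq 1$. *)

(* Defs.v *)
From HB Require Import structures.
From mathcomp Require Import all_boot all_order all_algebra.
Set Implicit Arguments. Unset Strict Implicit. Unset Printing Implicit Defensive.
Import GRing.Theory.
Local Open Scope ring_scope.

Definition is_ideal (A : comNzRingType) (I : A -> Prop) : Prop :=
  [/\ I 0,
      (forall x y, I x -> I y -> I (x + y)) &
      (forall a x, I x -> I (a * x))].

Definition is_maximal_ideal (A : comNzRingType) (I : A -> Prop) : Prop :=
  [/\ is_ideal I, ~ I 1 &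
      forall J : A -> Prop, is_ideal J -> (forall x, I x -> J x) ->
        (forall x, J x <-> I x) \/ (forall x, J x)].

Definition ideal_mul (A : comNzRingType) (I J : A -> Prop) : A -> Prop :=
  fun x => exists s : seq (A * A),
    {in s, forall p, I p.1 /\ J p.2} /\ x = \sum_(p <- s) p.1 * p.2.

Fixpoint ideal_pow (A : comNzRingType) (I : A -> Prop) (t : nat) : A -> Prop :=
  match t with
  | 0 => fun _ => True
  | t'.+1 => ideal_mul I (ideal_pow I t')
  end.

Definition contraction (R : idomainType) (I : {poly R} -> Prop) : R -> Prop :=
  fun r => I r%:P.

Definition power_stable (R : idomainType) (I : {poly R} -> Prop) : Prop :=
  forall t : nat, (1 <= t)%N ->
    forall r : R, contraction (ideal_pow I t) r <-> ideal_pow (contraction I) t r.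

(* Main.v *)
Require Import Defs.
From mathcomp Require Import all_boot all_order all_algebra.
From Stdlib Require Import Classical Lia.
Set Implicit Arguments. Unset Strict Implicit. Unset Printing Implicit Defensive.
Import GRing.Theory.
Local Open Scope ring_scope.
Import Pdiv.Ring Pdiv.RingMonic.

Ltac nlia := unfold subn, addn in *; lia.

Lemma A1 a b j : (0 < a -> a <= b -> b.-1 <= j -> b - a <= j)%N.
Proof. move=> /leP H1 /leP H2 /leP H3; apply/leP; nlia. Qed.
Lemma A2 b j : (b.-1 <= j -> j < b -> j = b.-1)%N.
Proof. move=> /leP H1 /leP H2; nlia. Qed.
Lemma A3 a b : (0 < a -> a <= b -> b.-1 - (b - a) = a.-1)%N.
Proof. move=> /leP H1 /leP H2; nlia. Qed.
Lemma A4 a b j : (a <= b -> b <= j -> a <= j - (b - a))%N.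
Proof. move=> /leP H1 /leP H2; apply/leP; nlia. Qed.
Lemma A5 x b n : (x <= b.-1 -> b < n.+1 -> 0 < b -> x < n)%N.
Proof. move=> /leP H1 /leP H2 /leP H3; apply/leP; nlia. Qed.


Lemma ideal_opp (A : comNzRingType) (J : A -> Prop) x : is_ideal J -> J x -> J (- x).
Proof. case=> _ _ HM Hx; rewrite -mulN1r; exact: HM. Qed.

Lemma ideal_sub (A : comNzRingType) (J : A -> Prop) x y : is_ideal J -> J x -> J y -> J (x - y).
Proof. move=> HJ Hx Hy; case: (HJ) => _ HD _; apply: HD => //; exact: ideal_opp. Qed.

Lemma ideal_big (A : comNzRingType) (J : A -> Prop) (I : Type) (r : seq I) (P : pred I) F :
  is_ideal J -> (forall i, P i -> J (F i)) -> J (\sum_(i <- r | P i) F i).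
Proof.
move=> [H0 HD _] HF; apply: (big_rec (fun x => J x)) => // i x Pi Jx.
exact: HD (HF _ Pi) Jx.
Qed.

Lemma ideal_mul_ideal (A : comNzRingType) (J K : A -> Prop) :
  is_ideal J -> is_ideal K -> is_ideal (ideal_mul J K).
Proof.
move=> [J0 JD JM] HK; split.
- by exists [::]; rewrite big_nil.
- move=> x y [s1 [H1 ->]] [s2 [H2 ->]]; exists (s1 ++ s2); split; last by rewrite big_cat.
  by move=> q; rewrite mem_cat => /orP [] ?; [apply: H1|apply: H2].
- move=> a x [s [H ->]]; exists (map (fun q => (a * q.1, q.2)) s); split.
  + move=> q /mapP [q' Hq' ->] /=; have [? ?] := H _ Hq'; split => //; exact: JM.
  + by rewrite big_map mulr_sumr; apply: eq_bigr => q _ /=; rewrite mulrA.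
Qed.

Lemma ideal_mul_prod (A : comNzRingType) (J K : A -> Prop) x y :
  J x -> K y -> ideal_mul J K (x * y).
Proof.
move=> Hx Hy; exists [:: (x, y)]; split; last by rewrite big_seq1.
by move=> q; rewrite inE => /eqP ->.
Qed.

Lemma ideal_pow_ideal (A : comNzRingType) (J : A -> Prop) t :
  is_ideal J -> is_ideal (ideal_pow J t).
Proof.
move=> HJ; elim: t => [|t IH] /=; first by split.
exact: ideal_mul_ideal.
Qed.

Definition coefs_in (R : comNzRingType) (J : R -> Prop) (u : {poly R}) := forall i, J u`_i.

Lemma key (R : comNzRingType) (J : R -> Prop) (d : {poly R}) :
  is_ideal J -> d \is monic -> forall u, coefs_in J u -> coefs_in J (rmodp u d).
Proof.
move=> HJ md u; have [n] := ubnP (size u); elim: n u => // n IH u Hsz Hu.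
case: (ltnP (size u) (size d)) => Hs; first by rewrite rmodp_small.
have d0 : d != 0 by apply: monic_neq0.
have szd : (0 < size d)%N by rewrite size_poly_gt0.
set k := (size u - size d)%N.
set c := lead_coef u.
set u' := u - (c *: 'X^k) * d.
have Hc : J c by apply: Hu.
have eq1 : u = u' + (c *: 'X^k) * d by rewrite /u' subrK.
have ->: rmodp u d = rmodp u' d by rewrite {1}eq1 rmodpD // rmodp_mull // addr0.
have coef' : forall j, u'`_j = u`_j - c * (if (j < k)%N then 0 else d`_(j - k)).
  by move=> j; rewrite /u' coefB -scalerAl coefZ coefXnM.
apply: IH.
- have : (size u' <= (size u).-1)%N.
    apply/leq_sizeP => j Hj; rewrite coef' ifF; last first.
      apply/negbTE; rewrite -leqNgt /k.
      exact: A1.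
    case: (ltnP j (size u)) => Hj2.
    + have ej : j = (size u).-1.
        exact: A2.
      have ejk : (j - k)%N = (size d).-1.
        rewrite ej /k; exact: A3.
      rewrite ejk ej.
      have -> : d`_(size d).-1 = 1 by move/monicP: md; rewrite /lead_coef.
      by rewrite mulr1 /c /lead_coef subrr.
    + rewrite nth_default // nth_default ?mulr0 ?subrr //.
      rewrite /k; exact: A4.
  move=> H; apply: (A5 H Hsz); exact: (leq_trans szd).
- move=> j; rewrite coef'; apply: ideal_sub => //.
  case: ifP => _; first by rewrite mulr0; case: HJ.
  by case: HJ => _ _ HM; rewrite mulrC; apply: HM.
Qed.

Lemma A6 s d j k : (d < j -> s - d <= k.+1 -> s - j <= k)%N.
Proof. move=> /leP H1 /leP H2; apply/leP; nlia. Qed.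

Lemma max_inv (A : comNzRingType) (J : A -> Prop) a :
  is_maximal_ideal J -> ~ J a -> exists b x, J x /\ 1 = x + b * a.
Proof.
case=> HJ N1 Hmax Na. pose K y := exists b x, J x /\ y = x + b * a.
have HK : is_ideal K.
  case: (HJ) => J0 JD JM; split.
  - by exists 0, 0; split => //; rewrite mul0r addr0.
  - move=> y1 y2 [b1 [x1 [H1 ->]]] [b2 [x2 [H2 ->]]]; exists (b1 + b2), (x1 + x2); split.
      exact: JD.
    by rewrite mulrDl addrACA.
  - move=> c y [b [x [H ->]]]; exists (c * b), (c * x); split; first exact: JM.
    by rewrite mulrDr mulrA.
have JK : forall x, J x -> K x by move=> x Hx; exists 0, x; rewrite mul0r addr0.
case: (Hmax K HK JK) => [H|H].
- exfalso; apply: Na; apply/H; exists 1, 0; split; first by case: HJ.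
  by rewrite mul1r add0r.
- exact: H 1.
Qed.

Lemma F1 (R : idomainType) (I : {poly R} -> Prop) u :
  is_ideal I -> coefs_in (contraction I) u -> I u.
Proof.
move=> HI Hu; rewrite -[u]coefK poly_def; apply: ideal_big => // i _.
rewrite -mul_polyC mulrC; case: HI => _ _ HM; apply: HM; exact: Hu.
Qed.

Lemma top (A : comNzRingType) (J : A -> Prop) (f : {poly A}) i :
  J 0 -> ~ J f`_i -> exists d, ~ J f`_d /\ forall j, (d < j)%N -> J f`_j.
Proof.
move=> J0 Hi; apply: NNPP => H.
have step : forall d, ~ J f`_d -> exists j, (d < j)%N /\ ~ J f`_j.
  move=> d Hd; apply: NNPP => H2; apply: H; exists d; split => // j Hj.
  by apply: NNPP => Hj'; apply: H2; exists j.
suff: forall k d, (size f - d <= k)%N -> ~ J f`_d -> False.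
  by move/(_ _ i (leqnn _)); apply.
elim=> [|k IHk] d Hk Hd.
- by apply: Hd; rewrite nth_default // -subn_eq0 -leqn0.
- have [j [Hdj Hj]] := step d Hd; apply: (IHk j) => //; exact: A6 Hdj Hk.
Qed.

Lemma minimal (P : nat -> Prop) n : P n -> exists d, P d /\ forall k, (k < d)%N -> ~ P k.
Proof.
have [N] := ubnP n; elim: N n => // N IH n HnN Pn.
case: (classic (exists k, (k < n)%N /\ P k)) => [[k [Hk Pk]]|H].
- apply: (IH k) => //; rewrite ltnS in HnN; exact: leq_trans Hk HnN.
- by exists n; split => // k Hk Pk; apply: H; exists k.
Qed.

Lemma contraction_ideal (R : idomainType) (I : {poly R} -> Prop) :
  is_ideal I -> is_ideal (contraction I).
Proof.
case=> I0 ID IM; split; rewrite /contraction.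
- by rewrite polyC0.
- by move=> x y Hx Hy; rewrite polyCD; apply: ID.
- by move=> a x Hx; rewrite polyCM; apply: IM.
Qed.

Lemma exists_p (R : idomainType) (I : {poly R} -> Prop) :
  is_ideal I -> is_maximal_ideal (contraction I) ->
  exists p : {poly R}, p \is monic /\ (1 < size p)%N /\
    forall g, I g -> coefs_in (contraction I) (rmodp g p).
Proof.
move=> HI Hmax; set m := contraction I.
have Hm : is_ideal m by case: Hmax.
have m0 : m 0 by case: Hm.
case: (classic (forall f, I f -> coefs_in m f)) => Hall.
  exists 'X; split; first exact: monicX; split; first by rewrite size_polyX.
  move=> g Ig; apply: key => //; do ?[exact: monicX | exact: Hall].
rewrite /coefs_in in Hall.
have [f0 Hf0] := not_all_ex_not _ _ Hall.
have [If0 Hf0'] := imply_to_and _ _ Hf0.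
have [i0 Hi0] := not_all_ex_not _ _ Hf0'.
have [d0 [Hd0 Htop0]] := top m0 Hi0.
pose P d := exists f, I f /\ ~ m f`_d /\ forall j, (d < j)%N -> m f`_j.
have [d [[f [If [Hfd Hfj]]] Hmin]] :=
  @minimal P d0 (ex_intro _ f0 (conj If0 (conj Hd0 Htop0))).
have [b [x [mx Hbx]]] := max_inv Hmax Hfd.
have d_gt0 : (0 < d)%N.
  rewrite lt0n; apply/negP => /eqP d0E; apply: Hfd; rewrite d0E.
  have Ic : I (f - (f - (f`_0)%:P)).
    apply: ideal_sub => //; apply: F1 => // j; rewrite coefB coefC.
    case: j => [|j] /=; first by rewrite subrr.
    by rewrite subr0; apply: Hfj; rewrite d0E.
  by move: Ic; rewrite opprB addrC subrK.
pose p := 'X^d + \poly_(i < d) (b * f`_i).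
have szq : (size (\poly_(i < d) (b * f`_i)%R) < size ('X^d : {poly R}))%N.
  by rewrite size_polyXn ltnS size_poly.
have szp : size p = d.+1 by rewrite /p size_polyDl // size_polyXn.
have mp : p \is monic by rewrite monicE /p lead_coefDl // lead_coefXn.
exists p; split => //; split; first by rewrite szp ltnS.
move=> g Ig.
have Hdiff : coefs_in m (b%:P * f - p).
  move=> j; rewrite coefB coefCM /p coefD coefXn coef_poly.
  case: (ltngtP j d) => Hj.
  - by rewrite add0r subrr.
  - rewrite ?(gtn_eqF Hj) ?ltnNge ?(ltnW Hj) /= ?addr0 ?subr0.
    case: Hm => _ _ HM; apply: HM; exact: Hfj.
  - rewrite ?Hj ?eqxx ?ltnn /= ?addr0; have -> : b * f`_d - 1 = - x by rewrite [in LHS]Hbx opprD addrCA subrr addr0.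
    exact: ideal_opp.
set q := rdivp g p.
set r := rmodp g p.
have Eg : g = q * p + r by apply: rdivp_eq.
have Ir : I r.
  have E : r = g - (q * b%:P) * f + q * (b%:P * f - p).
    by rewrite mulrBr -mulrA addrA subrK Eg addrAC subrr add0r.
  case: (HI) => _ ID IM.
  rewrite E; apply: ID; last by apply: IM; apply: F1.
  by apply: ideal_sub => //; apply: IM.
move=> j; apply: NNPP => Hj.
have [d' [Hd' Htop']] := top m0 Hj.
have d'd : (d' < d)%N.
  rewrite ltnNge; apply/negP => Hle; apply: Hd'; rewrite nth_default //.
  apply: leq_trans Hle; rewrite -ltnS -szp; exact: ltn_rmodpN0 (monic_neq0 mp).
exact: (Hmin d' d'd (ex_intro _ r (conj Ir (conj Hd' Htop')))).
Qed.

Theorem corollary3p6 (R : idomainType) (I : {poly R} -> Prop) :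
  is_ideal I -> is_maximal_ideal (contraction I) -> power_stable I.
Proof.
move=> HI Hmax t Ht r; set m := contraction I.
have Hm : is_ideal m by case: Hmax.
split.
- move=> Hr; have [p [mp [szp Hp]]] := exists_p HI Hmax.
  have claim : forall t g, ideal_pow I t g -> coefs_in (ideal_pow m t) (rmodp g p).
    elim=> [|t' IH] g /=; first by [].
    move=> [s [Hs ->]] j; rewrite rmodp_sum // coef_sum big_seq.
    apply: ideal_big; first exact: (ideal_pow_ideal t'.+1 Hm).
    move=> q Hq; have [Iq1 Iq2] := Hs q Hq.
    have -> : rmodp (q.1 * q.2) p = rmodp (rmodp q.1 p * rmodp q.2 p) p.
      by rewrite rmodp_mulmr // (mulrC (rmodp q.1 p)) rmodp_mulmr // mulrC.
    apply: key => //; first exact: (ideal_pow_ideal t'.+1 Hm).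
    move=> k; rewrite coefM; apply: ideal_big; first exact: (ideal_pow_ideal t'.+1 Hm).
    move=> i _; apply: ideal_mul_prod; [exact: Hp | exact: IH].
  have := claim t _ Hr 0%N; rewrite rmodp_small ?coefC //.
  exact: leq_ltn_trans (size_polyC_leq1 r) szp.
- move=> {Ht}; elim: t r => [|t IH] r /=; first by [].
  move=> [s [Hs ->]]; exists (map (fun q => (q.1%:P, q.2%:P)) s); split.
  + move=> q /mapP [q' Hq' ->] /=; have [H1 H2] := Hs _ Hq'; split => //; exact: IH.
  + by rewrite big_map rmorph_sum; apply: eq_bigr => q _; exact: rmorphM.
Qed.
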